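(* If $J$ is a left (respectively, right) ideal in a C*-algebra, then $J$ possesses a contractive quasi-identity if and only if $J$ has a contractive right (respectively, left) identity. In this case, the contractive right (respectively, left) identity is the only contractive quasi-identity of $J$.
   Context: A quasi-identity of a ring $R$ is an element $e\in R$ with $r=er+re-ere$ for all $r\in R$; it is contractive if $\|e\|\le1$. Ideals are norm-closed. *)

(* Defs.v *)
From HB Require Import structures.
From mathcomp Require Import all_boot all_order all_algebra.
From mathcomp Require Import all_classical all_reals all_analysis.
From mathcomp Require Import complex.
Set Implicit Arguments. Unset Strict Implicit. Unset Printing Implicit Defensive.
Import Order.TTheory GRing.Theory Num.Theory.
Local Open Scope ring_scope.
Local Open Scope classical_set_scope.

Record cstar_algebra (R : realType) (V : completeNormedModType R[i])
    (mul : V -> V -> V) (star : V -> V) : Prop := CstarAlgebra {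
  cs_mulA : forall x y z, mul x (mul y z) = mul (mul x y) z;
  cs_mulDl : forall x y z, mul (x + y) z = mul x z + mul y z;
  cs_mulDr : forall x y z, mul x (y + z) = mul x y + mul x z;
  cs_mulZl : forall (a : R[i]) x y, mul (a *: x) y = a *: mul x y;
  cs_mulZr : forall (a : R[i]) x y, mul x (a *: y) = a *: mul x y;
  cs_normM : forall x y, `|mul x y| <= `|x| * `|y|;
  cs_starD : forall x y, star (x + y) = star x + star y;
  cs_starZ : forall (a : R[i]) x, star (a *: x) = a^* *: star x;
  cs_starK : forall x, star (star x) = x;
  cs_starM : forall x y, star (mul x y) = mul (star y) (star x);
  cs_cstar : forall x, `|mul (star x) x| = `|x| ^+ 2
}.

Definition subspace (R : realType) (V : completeNormedModType R[i]) (J : set V) :=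
  [/\ J 0, (forall x y, J x -> J y -> J (x + y)) &
      (forall (a : R[i]) x, J x -> J (a *: x))].

Definition left_ideal (R : realType) (V : completeNormedModType R[i])
    (mul : V -> V -> V) (J : set V) :=
  [/\ subspace J, closed J & forall a x, J x -> J (mul a x)].

Definition right_ideal (R : realType) (V : completeNormedModType R[i])
    (mul : V -> V -> V) (J : set V) :=
  [/\ subspace J, closed J & forall a x, J x -> J (mul x a)].

Definition quasi_identity (R : realType) (V : completeNormedModType R[i])
    (mul : V -> V -> V) (J : set V) (e : V) :=
  J e /\ forall r, J r -> r = mul e r + mul r e - mul (mul e r) e.

Definition right_identity (R : realType) (V : completeNormedModType R[i])
    (mul : V -> V -> V) (J : set V) (e : V) :=
  J e /\ forall r, J r -> mul r e = r.

Definition left_identity (R : realType) (V : completeNormedModType R[i])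
    (mul : V -> V -> V) (J : set V) (e : V) :=
  J e /\ forall r, J r -> mul e r = r.

Definition contractive (R : realType) (V : completeNormedModType R[i]) (e : V) :=
  `|e| <= 1.

(* Main.v *)
Require Import Defs.
From HB Require Import structures.
From mathcomp Require Import all_boot all_order all_algebra.
From mathcomp Require Import all_classical all_reals all_analysis.
From mathcomp Require Import complex.
From mathcomp Require Import ring lra.
Import Order.TTheory GRing.Theory Num.Theory.
Local Open Scope ring_scope.
Local Open Scope classical_set_scope.
Section CS.
Variables (R : realType) (V : completeNormedModType R[i])
  (mul : V -> V -> V) (star : V -> V).
Hypothesis HA : cstar_algebra mul star.

Let mulA := cs_mulA HA.
Let mulDl := cs_mulDl HA.
Let mulDr := cs_mulDr HA.
Let mulZl := cs_mulZl HA.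
Let mulZr := cs_mulZr HA.
Let starD := cs_starD HA.
Let starZ := cs_starZ HA.
Let starK := cs_starK HA.
Let starM := cs_starM HA.

Lemma mulx0 x : mul x 0 = 0.
Proof. by apply: (@addrI _ (mul x 0)); rewrite -mulDr !addr0. Qed.
Lemma mul0x x : mul 0 x = 0.
Proof. by apply: (@addrI _ (mul 0 x)); rewrite -mulDl !addr0. Qed.
Lemma mulxN x y : mul x (- y) = - mul x y.
Proof. by apply: (@addrI _ (mul x y)); rewrite -mulDr !subrr mulx0. Qed.
Lemma mulNx x y : mul (- x) y = - mul x y.
Proof. by apply: (@addrI _ (mul x y)); rewrite -mulDl !subrr mul0x. Qed.
Lemma mulxB x y z : mul x (y - z) = mul x y - mul x z.
Proof. by rewrite mulDr mulxN. Qed.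
Lemma mulBx x y z : mul (x - y) z = mul x z - mul y z.
Proof. by rewrite mulDl mulNx. Qed.
Lemma star0 : star 0 = 0.
Proof. by apply: (@addrI _ (star 0)); rewrite -starD !addr0. Qed.
Lemma starN x : star (- x) = - star x.
Proof. by apply: (@addrI _ (star x)); rewrite -starD !subrr star0. Qed.
Lemma starB x y : star (x - y) = star x - star y.
Proof. by rewrite starD starN. Qed.

Lemma cstar0 u : mul (star u) u = 0 -> u = 0.
Proof.
move=> H; have := cs_cstar HA u; rewrite H normr0 => /esym/eqP.
by rewrite expf_eq0 /= normr_eq0 => /eqP.
Qed.

Lemma norm_star_le x : `|x| <= `|star x|.
Proof.
have [->|] := eqVneq `|x| 0; first exact: normr_ge0.
move=> nz; have xp : 0 < `|x| by rewrite lt_def nz normr_ge0.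
rewrite -(ler_pM2r xp) -expr2 -(cs_cstar HA x); exact: (cs_normM HA).
Qed.

Lemma norm_star x : `|star x| = `|x|.
Proof.
apply: le_anti; rewrite norm_star_le andbT.
by rewrite -{2}(starK x) norm_star_le.
Qed.

Definition nv (x : V) : R := complex.Re `|x|.
Lemma normE x : `|x| = (nv x)%:C%C.
Proof. by rewrite /nv RRe_real // ger0_real. Qed.
Lemma nv_ge0 x : 0 <= nv x.
Proof. by rewrite -ler0c -normE normr_ge0. Qed.
Lemma nvD x y : nv (x + y) <= nv x + nv y.
Proof. by rewrite -lecR rmorphD /= -!normE ler_normD. Qed.
Lemma nvB x y : nv (x - y) <= nv x + nv y.
Proof. by rewrite -lecR rmorphD /= -!normE -(normrN y) ler_normD. Qed.
Lemma nvM x y : nv (mul x y) <= nv x * nv y.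
Proof. by rewrite -lecR rmorphM /= -!normE (cs_normM HA). Qed.
Lemma nv_cstar x : nv (mul (star x) x) = nv x ^+ 2.
Proof. by apply: complexI; rewrite rmorphXn /= -!normE (cs_cstar HA). Qed.
Lemma nv_star x : nv (star x) = nv x.
Proof. by rewrite /nv norm_star. Qed.
Lemma nv_eq0 x : nv x = 0 -> x = 0.
Proof. by move=> H; apply: normr0_eq0; rewrite normE H. Qed.
Lemma nvZ (a : R) x : 0 <= a -> nv (a%:C%C *: x) = a * nv x.
Proof.
move=> a0; apply: complexI; rewrite rmorphM /= -!normE normrZ ger0_norm //.
by rewrite ler0c.
Qed.


Lemma quasi_right (J : set V) e :
  (forall a x, J x -> J (mul a x)) ->
  quasi_identity mul J e -> right_identity mul J e.
Proof.
move=> Hl [Je Hq]; split=> // r Jr.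
have C1 z : J z -> mul e (z - mul z e) = z - mul z e.
  move=> Jz; rewrite mulxB mulA; apply/esym; rewrite {1}(Hq z Jz).
  by rewrite addrAC addrK.
set s := r - mul r e.
have Hs a : mul e (mul a s) = mul a s.
  have E : mul a s = mul a r - mul (mul a r) e by rewrite /s mulxB mulA.
  by rewrite E; apply: C1; apply: Hl.
set x := mul (star r) s.
have ex : mul e x = x by apply: Hs.
have eex : mul e (mul (star e) x) = mul (star e) x.
  by rewrite /x [mul (star e) _]mulA Hs.
set u := mul (star e) x - x.
have su : star u = mul (star x) e - star x.
  by rewrite /u starB starM starK.
have uu : mul (star u) u = 0.
  rewrite su mulBx !mulxB -!mulA eex ex.
  by rewrite subrr.
have u0 := cstar0 _ uu.
have ss : mul (star s) s = 0.
  rewrite /s starB starM mulBx -mulA -/x.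
  by move/eqP: u0; rewrite subr_eq0 => /eqP ->; rewrite subrr.
by move/eqP: (cstar0 _ ss); rewrite subr_eq0 => /eqP.
Qed.

Lemma right_quasi (J : set V) e :
  (forall a x, J x -> J (mul a x)) ->
  right_identity mul J e -> quasi_identity mul J e.
Proof.
move=> Hl [Je Hr]; split=> // r Jr.
by rewrite Hr // Hr; [rewrite addrAC subrr add0r | apply: Hl].
Qed.


Fixpoint cseq (n : nat) : R := if n is n'.+1 then (1 + cseq n' ^+ 2) / 2 else 0.

Lemma cseq_bound n :
  [/\ 0 <= 1 - cseq n, 1 - cseq n <= 1 & (1 - cseq n) * (n%:R + 2) <= 2].
Proof.
elim: n => [|n [h0 h1 h2]] /=; first by split; lra.
have -> : n.+1%:R = n%:R + 1 :> R by rewrite natr1.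
have N0 : 0 <= (n%:R : R) by [].
set c := cseq n in h0 h1 h2 *.
have H1 : 0 <= (2 - (1 - c) * (n%:R + 2)) * (2 - (1 - c)).
  by apply: mulr_ge0; lra.
have H2 : 0 <= (1 - c) * (1 - c) by apply: mulr_ge0.
split; nra.
Qed.

Lemma cseq_diff n : cseq n.+2 - cseq n.+1 = (cseq n.+1 ^+ 2 - cseq n ^+ 2) / 2.
Proof.
have D1 : cseq n.+2 = (1 + cseq n.+1 ^+ 2) / 2 by [].
have D0 : cseq n.+1 = (1 + cseq n ^+ 2) / 2 by [].
rewrite D1 {2}D0; move: (cseq n.+1) (cseq n) => u v; by field.
Qed.

Let h : R[i] := ((2:R)^-1)%:C%C.

Lemma hh : h + h = 1.
Proof. by rewrite /h -rmorphD /= -(mul1r 2^-1) -splitr. Qed.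

Lemma hstar : h^* = h.
Proof. by apply: conj_Creal; apply: ger0_real; rewrite /h ler0c invr_ge0 ler0n. Qed.

Section G.
Variable k : V.
Hypothesis sk : star k = k.
Hypothesis nk : nv k <= 1.

Fixpoint gseq (n : nat) : V :=
  if n is n'.+1 then h *: (k + mul (gseq n') (gseq n')) else 0.

Lemma gstar n : star (gseq n) = gseq n.
Proof.
elim: n => [|n IH] /=; first exact: star0.
by rewrite starZ hstar starD starM IH sk.
Qed.

Lemma gk n : mul k (gseq n) = mul (gseq n) k.
Proof.
elim: n => [|n IH] /=; first by rewrite mulx0 mul0x.
rewrite mulZr mulZl mulDr mulDl; congr (_ *: (_ + _)).
by rewrite mulA IH -mulA IH mulA.
Qed.

Lemma gg n m : mul (gseq n) (gseq m) = mul (gseq m) (gseq n).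
Proof.
elim: n m => [|n IH] m /=; first by rewrite mulx0 mul0x.
rewrite mulZr mulZl mulDr mulDl gk; congr (_ *: (_ + _)).
by rewrite mulA -(IH m) -!mulA (IH m).
Qed.

Lemma g2 n : gseq n.+1 + gseq n.+1 = k + mul (gseq n) (gseq n).
Proof. by rewrite /= -scalerDl hh scale1r. Qed.

Lemma diffsq (a b : V) : mul a b = mul b a ->
  (k + mul a a) - (k + mul b b) = mul (a - b) (a + b).
Proof.
move=> H; rewrite mulDr !mulBx H.
by rewrite opprD addrA [k + _]addrC addrK addrA subrK.
Qed.

Lemma gnorm n : nv (gseq n) <= cseq n.
Proof.
elim: n => [|n IH] /=; first by rewrite /nv normr0.
rewrite nvZ ?invr_ge0 ?ler0n //.
have := nvD k (mul (gseq n) (gseq n)); have := nvM (gseq n) (gseq n).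
have := nv_ge0 (gseq n); have := nv_ge0 (mul (gseq n) (gseq n)).
have := nv_ge0 (k + mul (gseq n) (gseq n)).
set a := nv (gseq n); set b := nv (mul _ _); set c := nv (k + _).
move=> c0 b0 a0 hb hc.
have haa : a * a <= cseq n * cseq n by apply: ler_pM.
rewrite mulrC ler_pM2r ?invr_gt0 ?ltr0n // expr2.
by apply: (le_trans hc); apply: lerD => //; apply: le_trans hb haa.
Qed.

Lemma gdiff n : nv (gseq n.+1 - gseq n) <= cseq n.+1 - cseq n.
Proof.
elim: n => [|n IH].
  rewrite /= subr0 mulx0 addr0 nvZ ?invr_ge0 ?ler0n // expr0n /= addr0 subr0.
  by rewrite mul1r -{2}(mulr1 2^-1) ler_pM2l ?invr_gt0 ?ltr0n.
set G' := gseq n.+1; set G := gseq n.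
have E : gseq n.+2 - G' = h *: mul (G' - G) (G' + G).
  have -> : gseq n.+2 - G' = h *: ((k + mul G' G') - (k + mul G G)).
    by rewrite scalerBr.
  by congr (_ *: _); apply: diffsq; rewrite /G /G' gg.
rewrite E nvZ ?invr_ge0 ?ler0n //.
have := nvM (G' - G) (G' + G); have := nvD G' G.
have := gnorm n.+1; have := gnorm n.
have := nv_ge0 (G' - G); have := nv_ge0 (G' + G); have := nv_ge0 G; have := nv_ge0 G'.
have := nv_ge0 (mul (G' - G) (G' + G)).
rewrite cseq_diff.
move: IH.
set x := nv (mul _ _); set y := nv (G' - G); set z := nv (G' + G).
set c1 := cseq n.+1; set c0 := cseq n.
move=> IH x0 a0 b0 z0 y0 Hb Ha Hz Hx.
rewrite mulrC ler_pM2r ?invr_gt0 ?ltr0n //; nra.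
Qed.

End G.

Lemma contr_idem_sa p : mul p p = p -> nv p <= 1 -> star p = p.
Proof.
move=> pp np.
set k := mul (star p) p.
have sk : star k = k by rewrite /k starM starK.
have nk : nv k <= 1 by rewrite /k nv_cstar; apply: exprn_ile1 => //; apply: nv_ge0.
have kp : mul k p = k by rewrite /k -mulA pp.
have pk : mul (star p) k = k by rewrite /k mulA -starM pp.
set t := k - p.
have st : star t = k - star p by rewrite /t starB sk.
have F1 : mul (star t) p = 0 by rewrite st mulBx kp subrr.
have F3 : mul (star t) t = mul k k - k.
  by rewrite st /t mulBx !mulxB kp pk -/k subrr subr0.
have bound n : nv t * (n%:R + 2) <= 2.
  set g := gseq k n; set w := p - mul p g.
  have F2 : mul (star t) w = 0 by rewrite /w mulxB mulA F1 mul0x subrr.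
  have gs : star g = g := gstar k sk n.
  have kg : mul k g = mul g k := gk k n.
  have F4 : mul (star w) w = k - (mul k g + mul k g) + mul k (mul g g).
    rewrite /w starB starM gs mulBx !mulxB.
    have e1 : mul (star p) (mul p g) = mul k g by rewrite mulA.
    have e2 : mul (mul g (star p)) p = mul k g by rewrite -mulA -/k kg.
    have e3 : mul (mul g (star p)) (mul p g) = mul k (mul g g).
      by rewrite mulA -(mulA g) -/k -kg -mulA.
    rewrite e1 e2 e3 -/k.
    by rewrite opprB opprD !addrA addrAC.
  have E : mul (star (t + w)) (t + w) =
           mul k ((gseq k n.+1 + gseq k n.+1) - (g + g)).
    rewrite g2 -/g starD mulDl (mulDr (star t) t w) (mulDr (star w) t w) F2 F3 F4.
    rewrite (mulxB k) (mulDr k k).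
    have -> : mul (star w) t = 0 by rewrite -(starK t) -starM F2 star0.
    by rewrite (mulDr k g g) addr0 add0r !addrA subrK addrAC.
  have nE : nv ((gseq k n.+1 + gseq k n.+1) - (g + g)) <= (1 - cseq n) ^+ 2.
    have -> : (gseq k n.+1 + gseq k n.+1) - (g + g) =
              (gseq k n.+1 - g) + (gseq k n.+1 - g).
      by rewrite opprD !addrA; congr (_ + _); rewrite addrAC.
    apply: (le_trans (nvD _ _)).
    have := gdiff k nk n; rewrite -/g.
    have -> : (1 - cseq n) ^+ 2 = 2 * (cseq n.+1 - cseq n).
      by rewrite [cseq n.+1]/=; move: (cseq n) => u; field.
    lra.
  have [d0 d1 d2] := cseq_bound n.
  have ntw : nv (t + w) ^+ 2 <= (1 - cseq n) ^+ 2.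
    rewrite -nv_cstar E; apply: (le_trans (nvM _ _)).
    rewrite -[X in _ <= X]mul1r; apply: ler_pM => //; apply: nv_ge0.
  have ntw' : nv (t + w) <= 1 - cseq n.
    have := nv_ge0 (t + w); move: ntw d0; set a := nv _; set b := 1 - _.
    move=> *; nra.
  have nt : nv t ^+ 2 <= nv t * (1 - cseq n).
    rewrite -nv_cstar.
    have -> : mul (star t) t = mul (star t) (t + w) by rewrite mulDr F2 addr0.
    apply: (le_trans (nvM _ _)); rewrite nv_star; apply: ler_wpM2l => //.
    exact: nv_ge0.
  have [z|nz] := eqVneq (nv t) 0; first by rewrite z mul0r ler0n.
  have pos : 0 < nv t by rewrite lt_def nz nv_ge0.
  have le1 : nv t <= 1 - cseq n by rewrite -(ler_pM2l pos) -expr2.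
  by apply: le_trans d2; apply: ler_wpM2r.
have t0 : nv t = 0.
  have := nv_ge0 t; rewrite le_eqVlt => /orP [/eqP<-//|pos].
  have b0 : 0 <= 2 / nv t by apply: divr_ge0 => //; apply: ltW.
  have := archi_boundP b0; set N := Num.Def.archi_bound _ => hN.
  have := bound N; rewrite ltr_pdivrMr // in hN.
  move: hN; move: (N%:R : R) => M hN hB.
  have : nv t * M + 2 * nv t <= 2 by rewrite (mulrC 2) -mulrDr.
  have : 0 < 2 * nv t by apply: mulr_gt0.
  rewrite mulrC in hN; lra.
move/eqP: (nv_eq0 _ t0); rewrite subr_eq0 => /eqP kp'.
by rewrite -kp'.
Qed.

Lemma contr_nv (e : V) : contractive e -> nv e <= 1.
Proof. by rewrite /contractive normE -lecR rmorph1. Qed.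

End CS.


Lemma left_case (R : realType) (V : completeNormedModType R[i])
    (mul : V -> V -> V) (star : V -> V) (HA : cstar_algebra mul star)
    (J : set V) :
  left_ideal mul J ->
     ((exists e, quasi_identity mul J e /\ contractive e) <->
      (exists e, right_identity mul J e /\ contractive e)) /\
     (forall e, right_identity mul J e -> contractive e ->
        forall q, quasi_identity mul J q -> contractive q -> q = e).
Proof.
case=> _ _ Hl; split.
  split=> -[e [He Ce]]; exists e; split=> //.
    exact: (@quasi_right _ _ _ _ HA _ _ Hl He).
  exact: (@right_quasi _ _ _ _ _ Hl He).
move=> e He Ce q Hq Cq.
have [Jq Rq] := @quasi_right _ _ _ _ HA _ _ Hl Hq.
case: He => Je Re.
have se := @contr_idem_sa _ _ _ _ HA e (Re e Je) (@contr_nv _ _ _ Ce).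
have sq := @contr_idem_sa _ _ _ _ HA q (Rq q Jq) (@contr_nv _ _ _ Cq).
have E : star (mul e q) = mul q e by rewrite (cs_starM HA) se sq.
by move: E; rewrite (Rq e Je) (Re q Jq) se => ->.
Qed.

Lemma cstar_op (R : realType) (V : completeNormedModType R[i])
    (mul : V -> V -> V) (star : V -> V) :
  cstar_algebra mul star -> cstar_algebra (fun x y => mul y x) star.
Proof.
move=> HA; constructor.
- by move=> x y z /=; rewrite (cs_mulA HA).
- by move=> x y z /=; rewrite (cs_mulDr HA).
- by move=> x y z /=; rewrite (cs_mulDl HA).
- by move=> a x y /=; rewrite (cs_mulZr HA).
- by move=> a x y /=; rewrite (cs_mulZl HA).
- by move=> x y /=; rewrite mulrC; apply: (cs_normM HA).
- exact: (cs_starD HA).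
- exact: (cs_starZ HA).
- exact: (cs_starK HA).
- by move=> x y /=; rewrite (cs_starM HA).
- move=> x /=; rewrite -{1}(cs_starK HA x) (cs_cstar HA).
  by rewrite (@norm_star _ _ _ _ HA).
Qed.

Lemma quasi_op (R : realType) (V : completeNormedModType R[i])
    (mul : V -> V -> V) (star : V -> V) (HA : cstar_algebra mul star)
    (J : set V) e :
  quasi_identity (fun x y => mul y x) J e <-> quasi_identity mul J e.
Proof.
split=> -[Je H]; split=> // r Jr; rewrite {1}(H r Jr) /=.
  by rewrite (addrC (mul r e)) (cs_mulA HA).
by rewrite (addrC (mul r e)) (cs_mulA HA).
Qed.

Theorem corollary4p6 (R : realType) (V : completeNormedModType R[i])
    (mul : V -> V -> V) (star : V -> V) (HA : cstar_algebra mul star)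
    (J : set V) :
  (left_ideal mul J ->
     ((exists e, quasi_identity mul J e /\ contractive e) <->
      (exists e, right_identity mul J e /\ contractive e)) /\
     (forall e, right_identity mul J e -> contractive e ->
        forall q, quasi_identity mul J q -> contractive q -> q = e)) /\
  (right_ideal mul J ->
     ((exists e, quasi_identity mul J e /\ contractive e) <->
      (exists e, left_identity mul J e /\ contractive e)) /\
     (forall e, left_identity mul J e -> contractive e ->
        forall q, quasi_identity mul J q -> contractive q -> q = e)).
Proof.
split; first exact: (@left_case _ _ _ _ HA J).
move=> Hr.
have [[H1 H2] H3] := @left_case _ _ _ _ (@cstar_op _ _ _ _ HA) J Hr.
split.
  split=> -[e [He Ce]].
    have [f [Hf Cf]] := H1 (ex_intro _ e (conj (proj2 (@quasi_op _ _ _ _ HA J e) He) Ce)).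
    by exists f.
  have [f [Hf Cf]] := H2 (ex_intro _ e (conj He Ce)).
  by exists f; split=> //; apply/(@quasi_op _ _ _ _ HA).
move=> e He Ce q Hq Cq; apply: (H3 e He Ce q _ Cq).
by apply/(@quasi_op _ _ _ _ HA).
Qed.
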